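(* Let $G$ be a graph, $in\colon\mathrm{dom}(G)\to D$ an inflow on $G$, and $G_1\subseteq G$ (i.e. $G=G_1\uplus G_2$ for some $G_2$). If $in_1=\mathrm{proj}(in,G)(G_1)$, then $\mathrm{flow}(in,G)|_{\mathrm{dom}(G_1)}=\mathrm{flow}(in_1,G_1)$.
   Context: Fix a flow domain $(D,\sqsubseteq,\sqcup,+,\cdot,0,1)$: a positive partially ordered $\omega$-complete semiring, i.e. $(D,\sqsubseteq)$ is an $\omega$-cpo with join $\sqcup$, $(D,+,\cdot,0,1)$ is a semiring, $+$ and $\cdot$ are continuous (preserve suprema of increasing chains), and $0$ is the least element. Fix a node label join-semilattice $(A,\sqsubseteq,\sqcup,a_e)$. A graph $G=(N,N^o,\lambda,\varepsilon)$ has a finite node set $N=\mathrm{dom}(G)$, a finite set of sinks $N^o$ disjoint from $N$, labels $\lambda\colon N\to A$, and edge function $\varepsilon\colon N\times(N\cup N^o)\to D$. The disjoint union $G_1\uplus G_2$ is defined iff $N_1\cap N_2=\emptyset$, and then equals $(N_1\cup N_2,(N_1^o\setminus N_2)\cup(N_2^o\setminus N_1),\lambda_1\uplus\lambda_2,\varepsilon')$ with $\varepsilon'(n_1,n_2)=\varepsilon_i(n_1,n_2)$ if $n_1\in N_i$ and $n_2\in N_i\cup N_i^o$ ($i=1,2$), and $0$ otherwise. $G_1\subseteq G$ iff $G=G_1\uplus G_2$ for some $G_2$. The capacity $\mathrm{cap}(G)$ is the least fixpoint of $\mathrm{cap}(G)(n,n')=\delta(n,n')+\sum_{n''\in N}\varepsilon(n,n'')\cdot\mathrm{cap}(G)(n'',n')$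 ($\delta(n,n')=1$ if $n=n'$, else $0$); the flow of an inflow $in\colon N\to D$ is $\mathrm{flow}(in,G)(n)=\sum_{n'\in N}in(n')\cdot\mathrm{cap}(G)(n',n)$ for $n\in N$. For $G=G_1\uplus G_2$ with edge function $\varepsilon$, the projection of $in$ onto $G_1$ is $\mathrm{proj}(in,G)(G_1)\colon\mathrm{dom}(G_1)\to D$, $\mathrm{proj}(in,G)(G_1)(n)=in(n)+\sum_{n'\in\mathrm{dom}(G)\setminus\mathrm{dom}(G_1)}\mathrm{flow}(in,G)(n')\cdot\varepsilon(n',n)$. *)

(* Defs.v *)
From HB Require Import structures.
From mathcomp Require Import all_boot all_order all_algebra.
Set Implicit Arguments. Unset Strict Implicit. Unset Printing Implicit Defensive.
Import GRing.Theory.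
Local Open Scope ring_scope.

(* D carries a semiring (D,+,*,0,1) (mathcomp pzSemiRingType), an order
   [le], and the supremum [sup] of increasing omega-chains (the join of
   the omega-cpo). *)

Definition increasing (D : Type) (le : D -> D -> Prop) (c : nat -> D) :=
  forall k, le (c k) (c k.+1).

Record flow_domain (D : pzSemiRingType) (le : D -> D -> Prop)
    (sup : (nat -> D) -> D) : Prop := FlowDomain {
  fd_refl : forall x, le x x;
  fd_trans : forall x y z, le x y -> le y z -> le x z;
  fd_antisym : forall x y, le x y -> le y x -> x = y;
  fd_sup_ub : forall c, increasing le c -> forall k, le (c k) (sup c);
  fd_sup_least : forall c, increasing le c ->
      forall u, (forall k, le (c k) u) -> le (sup c) u;
  fd_zero_least : forall x, le 0 x;
  fd_add_mono : forall x x' y y', le x x' -> le y y' -> le (x + y) (x' + y');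
  fd_mul_mono : forall x x' y y', le x x' -> le y y' -> le (x * y) (x' * y');
  fd_add_cont : forall c d, increasing le c -> increasing le d ->
      sup (fun k => c k + d k) = sup c + sup d;
  fd_mul_cont : forall c d, increasing le c -> increasing le d ->
      sup (fun k => c k * d k) = sup c * sup d
}.

(* Nodes are drawn from a universe V (an eqType); finite node sets are
   represented by sequences without duplicates.
   The functions lab/edge are total on V but only their values on
   N (resp. N x (N u N^o)) are meaningful. *)

Record graph (V : eqType) (A : Type) (D : pzSemiRingType) := Graph {
  gN : seq V;
  gNo : seq V;           (* sinks N^o *)
  glab : V -> A;
  gedge : V -> V -> D
}.

Section Graphs.
Variables (V : eqType) (A : Type) (D : pzSemiRingType).
Implicit Types (G : graph V A D).

Definition wf_graph G : Prop :=
  [/\ uniq (gN G), uniq (gNo G) & forall n, n \in gN G -> n \notin gNo G].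

(* [disj_union G G1 G2] : G = G1 (+) G2 (disjoint union, defined iff the
   node sets are disjoint), with equality of graphs meaning equal node
   sets, equal sink sets, and equal label/edge functions on their domains. *)
Definition disj_union G G1 G2 : Prop :=
  [/\ (forall n, n \in gN G1 -> n \notin gN G2),
      (forall n, (n \in gN G) = (n \in gN G1) || (n \in gN G2)),
      (forall n, (n \in gNo G) =
          ((n \in gNo G1) && (n \notin gN G2)) ||
          ((n \in gNo G2) && (n \notin gN G1))),
      (forall n, n \in gN G ->
          glab G n = if n \in gN G1 then glab G1 n else glab G2 n) &
      (forall n n', n \in gN G -> (n' \in gN G) || (n' \in gNo G) ->
          gedge G n n' =
            if (n \in gN G1) && ((n' \in gN G1) || (n' \in gNo G1))
            then gedge G1 n n'
            else if (n \in gN G2) && ((n' \in gN G2) || (n' \in gNo G2))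
            then gedge G2 n n'
            else 0)].

Definition subgraph G1 G : Prop :=
  exists G2, wf_graph G2 /\ disj_union G G1 G2.

Fixpoint cap_iter G (k : nat) : V -> V -> D :=
  match k with
  | 0 => fun _ _ => 0
  | k.+1 => fun n n' =>
      (if n == n' then 1 else 0) +
      \sum_(n'' <- gN G) gedge G n n'' * cap_iter G k n'' n'
  end.

(* cap(G): the least fixpoint of the capacity equation, i.e. the supremum
   of its Kleene iterates (the least fixpoint of a continuous map on an
   omega-cpo with least element). *)
Definition cap (sup : (nat -> D) -> D) G : V -> V -> D :=
  fun n n' => sup (fun k => cap_iter G k n n').

Definition flow (sup : (nat -> D) -> D) (inf : V -> D) G : V -> D :=
  fun n => \sum_(n' <- gN G) inf n' * cap sup G n' n.

Definition proj (sup : (nat -> D) -> D) (inf : V -> D) G G1 : V -> D :=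
  fun n => inf n +
    \sum_(n' <- gN G | n' \notin gN G1) flow sup inf G n' * gedge G n' n.

End Graphs.

(* Main.v *)
Require Import Defs.
From mathcomp Require Import all_boot all_order all_algebra.
From Stdlib Require Import FunctionalExtensionality.
Set Implicit Arguments. Unset Strict Implicit. Unset Printing Implicit Defensive.
Import GRing.Theory.
Local Open Scope ring_scope.

Section Aux.
Variables (D : pzSemiRingType) (le : D -> D -> Prop) (sup : (nat -> D) -> D).
Hypothesis HD : flow_domain le sup.
Variables (V : eqType) (A : Type).

Lemma refl x : le x x. Proof. exact: (fd_refl HD x). Qed.

Lemma sup_const x : sup (fun _ => x) = x.
Proof.
have inc: increasing le (fun _ : nat => x) by move=> k; apply: refl.
apply: (fd_antisym HD); last exact: (fd_sup_ub HD inc 0).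
apply: (fd_sup_least HD inc) => k; exact: refl.
Qed.

Lemma sup_shift c : increasing le c -> sup (fun k => c k.+1) = sup c.
Proof.
move=> inc.
have inc' : increasing le (fun k => c k.+1) by move=> k; apply: inc.
apply: (fd_antisym HD).
  apply: (fd_sup_least HD inc') => k; exact: (fd_sup_ub HD inc k.+1).
apply: (fd_sup_least HD inc) => k.
apply: (fd_trans HD (inc k)); exact: (fd_sup_ub HD inc' k).
Qed.

Lemma le_sum (I : eqType) (s : seq I) (P : pred I) F1 F2 :
  (forall x, x \in s -> P x -> le (F1 x) (F2 x)) ->
  le (\sum_(x <- s | P x) F1 x) (\sum_(x <- s | P x) F2 x).
Proof.
elim: s => [|y s IH] H; first by rewrite !big_nil; exact: refl.
have IH' : le (\sum_(x <- s | P x) F1 x) (\sum_(x <- s | P x) F2 x).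
  by apply: IH => x Hx; apply: H; rewrite inE Hx orbT.
rewrite !big_cons; case Py: (P y) => //.
apply: ((fd_add_mono HD)) => //; apply: H => //; exact: mem_head.
Qed.

Lemma le_sum0 (I : eqType) (s : seq I) F1 F2 :
  (forall x, x \in s -> le (F1 x) (F2 x)) ->
  le (\sum_(x <- s) F1 x) (\sum_(x <- s) F2 x).
Proof. move=> H; apply: (le_sum (P := xpredT)) => x Hx _; exact: H. Qed.

Lemma incr_sum (I : eqType) (s : seq I) (c : I -> nat -> D) :
  (forall x, x \in s -> increasing le (c x)) ->
  increasing le (fun k => \sum_(x <- s) c x k).
Proof. move=> H k; apply: le_sum0 => x Hx; exact: H. Qed.

Lemma sup_sum (I : eqType) (s : seq I) (c : I -> nat -> D) :
  (forall x, x \in s -> increasing le (c x)) ->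
  sup (fun k => \sum_(x <- s) c x k) = \sum_(x <- s) sup (c x).
Proof.
elim: s => [|y s IH] H.
  rewrite big_nil -[RHS](sup_const 0); congr sup.
  by apply: functional_extensionality => k; rewrite big_nil.
have -> : (fun k => \sum_(x <- y :: s) c x k) =
          (fun k => c y k + \sum_(x <- s) c x k).
  by apply: functional_extensionality => k; rewrite big_cons.
rewrite big_cons (fd_add_cont HD).
- rewrite IH // => x Hx; apply: H; by rewrite inE Hx orbT.
- apply: H; by rewrite inE eqxx.
- apply: incr_sum => x Hx; apply: H; by rewrite inE Hx orbT.
Qed.

Lemma sup_mull x c : increasing le c -> sup (fun k => x * c k) = x * sup c.
Proof.
move=> Hc.
have inc: increasing le (fun _ : nat => x) by move=> k; apply: refl.
have H := fd_mul_cont HD inc Hc; rewrite sup_const in H; exact H.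
Qed.

Lemma sup_mulr x c : increasing le c -> sup (fun k => c k * x) = sup c * x.
Proof.
move=> Hc.
have inc: increasing le (fun _ : nat => x) by move=> k; apply: refl.
have H := fd_mul_cont HD Hc inc; rewrite sup_const in H; exact H.
Qed.

Implicit Types (G : graph V A D).

Lemma cap_S G k a b : cap_iter G k.+1 a b =
  (if a == b then 1 else 0) + \sum_(m <- gN G) gedge G a m * cap_iter G k m b.
Proof. by []. Qed.

Lemma cap_incr G k a b : le (cap_iter G k a b) (cap_iter G k.+1 a b).
Proof.
elim: k a b => [|k IH] a b; first exact: (fd_zero_least HD).
rewrite (cap_S G k.+1) (cap_S G k).
apply: (fd_add_mono HD); first exact: refl.
apply: le_sum0 => m _; apply: (fd_mul_mono HD); [exact: refl | exact: IH].
Qed.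

Definition fi G (i : V -> D) k n := \sum_(n' <- gN G) i n' * cap_iter G k n' n.

Lemma fi_incr G i n : increasing le (fun k => fi G i k n).
Proof.
move=> k; apply: le_sum0 => m _; apply: (fd_mul_mono HD); [exact: refl | exact: cap_incr].
Qed.

Lemma fi0 G i n : fi G i 0 n = 0.
Proof. by rewrite /fi big1 // => m _ /=; rewrite mulr0. Qed.

Lemma flowE G i n : flow sup i G n = sup (fun k => fi G i k n).
Proof.
rewrite /flow /cap /fi (sup_sum (c := fun m k => i m * cap_iter G k m n)).
  apply: eq_bigr => m _; rewrite sup_mull //; move=> k; exact: cap_incr.
move=> m _ k; apply: (fd_mul_mono HD); [exact: refl | exact: cap_incr].
Qed.

Lemma fi_le_flow G i k n : le (fi G i k n) (flow sup i G n).
Proof. rewrite flowE; exact: (fd_sup_ub HD (fi_incr G i n)). Qed.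

Lemma sum_delta_r (s : seq V) (U : uniq s) b (Hb : b \in s) (F : V -> D) :
  \sum_(m <- s) F m * (if m == b then 1 else 0) = F b.
Proof.
rewrite (bigD1_seq b) //= eqxx mulr1 big1 ?addr0 // => m /negbTE ->.
by rewrite mulr0.
Qed.

Lemma sum_delta_l (s : seq V) (U : uniq s) a (Ha : a \in s) (F : V -> D) :
  \sum_(m <- s) (if a == m then 1 else 0) * F m = F a.
Proof.
rewrite (bigD1_seq a) //= eqxx mul1r big1 ?addr0 // => m Hm.
by rewrite eq_sym (negbTE Hm) mul0r.
Qed.

Lemma cap_right G (U : uniq (gN G)) k a b : a \in gN G -> b \in gN G ->
  cap_iter G k.+1 a b = (if a == b then 1 else 0) +
     \sum_(m <- gN G) cap_iter G k a m * gedge G m b.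
Proof.
elim: k a b => [|k IH] a b Ha Hb.
  by rewrite cap_S /= !big1 // => m _; rewrite ?mulr0 ?mul0r.
rewrite (cap_S G k.+1).
transitivity ((if a == b then 1 else 0) + \sum_(m <- gN G) gedge G a m *
   ((if m == b then 1 else 0) + \sum_(p <- gN G) cap_iter G k m p * gedge G p b)).
  congr (_ + _); rewrite big_seq [RHS]big_seq; apply: eq_bigr => m Hm.
  by rewrite IH.
under eq_bigr do rewrite mulrDr mulr_sumr.
rewrite big_split /= sum_delta_r //.
under [X in _ = _ + X]eq_bigr do rewrite mulrDl mulr_suml.
rewrite big_split /= sum_delta_l // !addrA; congr (_ + _).
rewrite exchange_big /=; apply: eq_bigr => p _; apply: eq_bigr => m _.
by rewrite mulrA.
Qed.

Lemma fi_rec G (U : uniq (gN G)) i k n : n \in gN G ->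
  fi G i k.+1 n = i n + \sum_(m <- gN G) fi G i k m * gedge G m n.
Proof.
move=> Hn; rewrite /fi.
transitivity (\sum_(n' <- gN G) i n' * ((if n' == n then 1 else 0) +
     \sum_(m <- gN G) cap_iter G k n' m * gedge G m n)).
  rewrite big_seq [RHS]big_seq; apply: eq_bigr => m Hm; by rewrite cap_right.
under eq_bigr do rewrite mulrDr mulr_sumr.
rewrite big_split /= sum_delta_r //; congr (_ + _).
rewrite exchange_big /=; apply: eq_bigr => m _; rewrite mulr_suml.
by apply: eq_bigr => p _; rewrite mulrA.
Qed.

Lemma flow_fix G (U : uniq (gN G)) i n : n \in gN G ->
  flow sup i G n = i n + \sum_(m <- gN G) flow sup i G m * gedge G m n.
Proof.
move=> Hn; rewrite flowE -(sup_shift (fi_incr G i n)).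
have -> : (fun k => fi G i k.+1 n) =
   (fun k => i n + \sum_(m <- gN G) fi G i k m * gedge G m n).
  by apply: functional_extensionality => k; exact: fi_rec.
have inc: increasing le (fun _ : nat => i n) by move=> k; apply: refl.
have incS : forall m, m \in gN G ->
   increasing le (fun k => fi G i k m * gedge G m n).
  move=> m _ k; apply: (fd_mul_mono HD); [exact: fi_incr | exact: refl].
rewrite (fd_add_cont HD inc (incr_sum incS)) sup_const; congr (_ + _).
rewrite (sup_sum incS); apply: eq_bigr => m _.
by rewrite sup_mulr ?flowE //; exact: fi_incr.
Qed.

Lemma flow_least G (U : uniq (gN G)) i (u : V -> D) :
  (forall n, n \in gN G ->
     le (i n + \sum_(m <- gN G) u m * gedge G m n) (u n)) ->
  forall n, n \in gN G -> le (flow sup i G n) (u n).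
Proof.
move=> Hu.
have H : forall k n, n \in gN G -> le (fi G i k n) (u n).
  elim=> [|k IH] n Hn; first by rewrite fi0; exact: (fd_zero_least HD).
  rewrite fi_rec //; apply: (fd_trans HD _ (Hu n Hn)).
  apply: (fd_add_mono HD); first exact: refl.
  apply: le_sum0 => m Hm; apply: (fd_mul_mono HD); [exact: IH | exact: refl].
move=> n Hn; rewrite flowE; apply: (fd_sup_least HD (fi_incr G i n)) => k.
exact: H.
Qed.

Lemma main_aux (G G1 : graph V A D) (inf in1 : V -> D) :
  wf_graph G -> wf_graph G1 -> subgraph G1 G ->
  (forall n, n \in gN G1 -> in1 n = proj sup inf G G1 n) ->
  forall n, n \in gN G1 -> flow sup inf G n = flow sup in1 G1 n.
Proof.
move=> [UN _ _] [UN1 _ _] [G2 [_ [Hdisj Hmem Hno Hlab He]]] Hin1.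
have sub : forall m, m \in gN G1 -> m \in gN G by move=> m Hm; rewrite Hmem Hm.
have Ee : forall m n, m \in gN G1 -> n \in gN G1 -> gedge G m n = gedge G1 m n.
  move=> m n Hm Hn; rewrite He ?sub ?Hm ?Hn //.
have split : forall (F : V -> D) n, n \in gN G1 ->
   \sum_(m <- gN G) F m * gedge G m n =
   \sum_(m <- gN G1) F m * gedge G1 m n +
   \sum_(m <- gN G | m \notin gN G1) F m * gedge G m n.
  move=> F n Hn; rewrite (bigID (fun m => m \in gN G1)) /=; congr (_ + _).
  rewrite -big_filter (perm_big (gN G1)).
    by rewrite big_seq [RHS]big_seq; apply: eq_bigr => m Hm; rewrite Ee.
  apply: uniq_perm; [exact: filter_uniq | exact: UN1 |].
  move=> x; rewrite mem_filter; case Hx: (x \in gN G1) => //=.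
  exact: sub.
have Ef : forall n, n \in gN G1 -> flow sup inf G n =
    in1 n + \sum_(m <- gN G1) flow sup inf G m * gedge G1 m n.
  move=> n Hn; rewrite (flow_fix UN) ?sub // split // Hin1 // /proj.
  by rewrite [X in _ + X]addrC addrA.
move=> n Hn; apply: (fd_antisym HD).
  rewrite flowE; apply: (fd_sup_least HD (fi_incr G inf n)) => k.
  elim: k n Hn => [|k IH] n Hn; first by rewrite fi0; exact: (fd_zero_least HD).
  rewrite (fi_rec UN) ?sub // split // (flow_fix UN1 in1 Hn) Hin1 // /proj.
  rewrite [X in _ + X]addrC addrA.
  apply: (fd_add_mono HD); first apply: (fd_add_mono HD); first exact: refl.
    apply: le_sum => m _ _; apply: (fd_mul_mono HD); [exact: fi_le_flow | exact: refl].
  apply: le_sum0 => m Hm; apply: (fd_mul_mono HD); [exact: IH | exact: refl].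
apply: (flow_least UN1) => // m Hm; rewrite Ef //; exact: refl.
Qed.

End Aux.

Theorem mainTheorem3 (D : pzSemiRingType) (le : D -> D -> Prop)
    (sup : (nat -> D) -> D) (HD : flow_domain le sup)
    (V : eqType) (A : Type) (G G1 : graph V A D) (inf in1 : V -> D) :
  wf_graph G -> wf_graph G1 -> subgraph G1 G ->
  (forall n, n \in gN G1 -> in1 n = proj sup inf G G1 n) ->
  forall n, n \in gN G1 -> flow sup inf G n = flow sup in1 G1 n.
Proof. exact: (main_aux HD). Qed.
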